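(* Let $\mathcal V$ be a congruence modular variety, $\mathbb A\in\mathcal V$, $n\ge2$, $\delta\in\mathrm{Con}(\mathbb A)$ and $l\in n$. If $R\le\mathbb A^{2^n}$ is an $(n)$-dimensional tolerance of $\mathbb A$ that has $\delta$-centrality, then $R^{\circ_l}$ is also an $(n)$-dimensional tolerance of $\mathbb A$ that has $\delta$-centrality.
   Context: Cube notation. $n=\{0,\dots,n-1\}$, $2=\{0,1\}$; $2^n$ is the set of functions $n\to2$, $\mathbf 1$ the constant function $1$. An $(n)$-cube over $A$ is $\gamma\in A^{2^n}$. For $i\in n$, $j\in 2$: $\mathrm{face}_i^j(\gamma)\in A^{2^{n\setminus\{i\}}}$ is $g\mapsto\gamma_{g\cup\{(i,j)\}}$; $\mathrm{glue}_{\{i\}}(\zeta,\eta)$ is the unique cube with $\mathrm{face}_i^0=\zeta$, $\mathrm{face}_i^1=\eta$; $\mathrm{refl}_i^j(\gamma)=\mathrm{glue}_{\{i\}}(\mathrm{face}_i^j\gamma,\mathrm{face}_i^j\gamma)$; $\mathrm{sym}_i(\gamma)=\mathrm{glue}_{\{i\}}(\mathrm{face}_i^1\gamma,\mathrm{face}_i^0\gamma)$. A subuniverse $R$ of $\mathbb A^{2^n}$ is an $(n)$-dimensional tolerance of $\mathbb A$ if $\mathrm{refl}_i^j(\gamma),\mathrm{sym}_i(\gamma)\in R$ for all $\gamma\in R$, $i\in n$, $j\in2$. $R^{\circ_l}$ is the set of all $\gamma\in A^{2^n}$ for which there are $s\ge2$ and $\mu_0,\dots,\mu_{s-1}\in A^{2^{n\setminus\{l\}}}$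 with $\mathrm{face}_l^0(\gamma)=\mu_0$, $\mathrm{face}_l^1(\gamma)=\mu_{s-1}$ and $\mathrm{glue}_{\{l\}}(\mu_r,\mu_{r+1})\in R$ for all $r<s-1$. Lines and centrality. For $i\in n$, $f\in 2^{n\setminus\{i\}}$, the $(i)$-cross-section line of $\gamma$ at $f$ is $(\gamma_{f\cup\{(i,0)\}},\gamma_{f\cup\{(i,1)\}})$; for $f=\mathbf1$ it is the $(i)$-pivot line, for $f\neq\mathbf 1$ an $(i)$-supporting line. $R$ has $(\delta,i)$-centrality if for every $\gamma\in R$ all of whose $(i)$-supporting lines lie in $\delta$, the $(i)$-pivot line of $\gamma$ lies in $\delta$; $R$ has $\delta$-centrality if it has $(\delta,i)$-centrality for all $i\in n$. *)

(* Defs.v *)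
From mathcomp Require Import all_boot.
From Stdlib Require Import Relations.
Unset Printing Implicit Defensive.

Record signature := Signature { op_sym : Type; arity : op_sym -> nat }.

Record algebra (S : signature) := Algebra {
  carrier :> Type;
  interp : forall f : op_sym S, ('I_(arity S f) -> carrier) -> carrier }.
Arguments carrier {S}.
Arguments interp {S}.

Inductive term (S : signature) (X : Type) : Type :=
  | tvar : X -> term S X
  | tapp : forall f : op_sym S, ('I_(arity S f) -> term S X) -> term S X.
Arguments tvar {S X}.
Arguments tapp {S X}.

Fixpoint eval_term {S : signature} (A : algebra S) {X : Type} (v : X -> A)
    (t : term S X) : A :=
  match t with
  | tvar x => v x
  | tapp f args => interp A f (fun k => eval_term A v (args k))
  end.

Definition models {S : signature} (Sigma : term S nat -> term S nat -> Prop)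
    (A : algebra S) : Prop :=
  forall s t, Sigma s t -> forall v : nat -> A, eval_term A v s = eval_term A v t.

Definition is_congruence {S : signature} (A : algebra S) (theta : A -> A -> Prop)
    : Prop :=
  equivalence A theta /\
  forall (f : op_sym S) (a b : 'I_(arity S f) -> A),
    (forall k, theta (a k) (b k)) -> theta (interp A f a) (interp A f b).

Definition con_join {A : Type} (a b : A -> A -> Prop) : A -> A -> Prop :=
  clos_trans A (fun x y => a x y \/ b x y).

Definition con_meet {A : Type} (a b : A -> A -> Prop) : A -> A -> Prop :=
  fun x y => a x y /\ b x y.

Definition con_modular {S : signature} (A : algebra S) : Prop :=
  forall alpha beta gamma : A -> A -> Prop,
    is_congruence A alpha -> is_congruence A beta -> is_congruence A gamma ->
    (forall x y, alpha x y -> gamma x y) ->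
    forall x y, con_meet (con_join alpha beta) gamma x y ->
                con_join alpha (con_meet beta gamma) x y.

Definition cm_variety {S : signature} (Sigma : term S nat -> term S nat -> Prop)
    : Prop :=
  forall B : algebra S, models Sigma B -> con_modular B.

(** [2^n] is [{ffun 'I_n -> bool}]; an (n)-cube over A is a map [2^n -> A]. *)
Definition cube (A : Type) (n : nat) := {ffun 'I_n -> bool} -> A.

Definition idx_minus {n : nat} (i : 'I_n) := {x : 'I_n | x != i}.
Definition cube_minus (A : Type) {n : nat} (i : 'I_n) :=
  {ffun idx_minus i -> bool} -> A.

(** [g \cup {(i,j)}] for [g : 2^(n\{i})]. *)
Definition ext {n : nat} (i : 'I_n) (j : bool) (g : {ffun idx_minus i -> bool})
    : {ffun 'I_n -> bool} :=
  [ffun x => if @insub _ (fun y => y != i) (idx_minus i) x is Some y then g y else j].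

Definition restr {n : nat} (i : 'I_n) (g : {ffun 'I_n -> bool})
    : {ffun idx_minus i -> bool} :=
  [ffun y : idx_minus i => g (val y)].

Definition face {A : Type} {n : nat} (i : 'I_n) (j : bool) (gam : cube A n)
    : cube_minus A i := fun g => gam (ext i j g).

Definition glue {A : Type} {n : nat} (i : 'I_n) (zeta eta : cube_minus A i)
    : cube A n := fun g => if g i then eta (restr i g) else zeta (restr i g).

Definition refl_cube {A : Type} {n : nat} (i : 'I_n) (j : bool) (gam : cube A n)
    : cube A n := glue i (face i j gam) (face i j gam).

Definition sym_cube {A : Type} {n : nat} (i : 'I_n) (gam : cube A n) : cube A n :=
  glue i (face i true gam) (face i false gam).

Definition subuniverse_pow {S : signature} (A : algebra S) {n : nat}
    (R : cube A n -> Prop) : Prop :=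
  forall (f : op_sym S) (args : 'I_(arity S f) -> cube A n),
    (forall k, R (args k)) -> R (fun g => interp A f (fun k => args k g)).

Definition tolerance {S : signature} (A : algebra S) {n : nat}
    (R : cube A n -> Prop) : Prop :=
  subuniverse_pow A R /\
  forall gam, R gam ->
    forall (i : 'I_n), (forall j : bool, R (refl_cube i j gam)) /\ R (sym_cube i gam).

Definition compose_l {A : Type} {n : nat} (l : 'I_n) (R : cube A n -> Prop)
    : cube A n -> Prop :=
  fun gam => exists (s : nat) (mu : nat -> cube_minus A l),
    2 <= s /\ face l false gam = mu 0 /\ face l true gam = mu s.-1 /\
    forall r, r < s.-1 -> R (glue l (mu r) (mu r.+1)).

Definition line_in {A : Type} {n : nat} (delta : A -> A -> Prop) (gam : cube A n)
    (i : 'I_n) (f : {ffun idx_minus i -> bool}) : Prop :=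
  delta (gam (ext i false f)) (gam (ext i true f)).

Definition centrality_i {A : Type} {n : nat} (delta : A -> A -> Prop)
    (R : cube A n -> Prop) (i : 'I_n) : Prop :=
  forall gam, R gam ->
    (forall f : {ffun idx_minus i -> bool}, f != [ffun => true] -> line_in delta gam i f) ->
    line_in delta gam i [ffun => true].

Definition centrality {A : Type} {n : nat} (delta : A -> A -> Prop)
    (R : cube A n -> Prop) : Prop :=
  forall i : 'I_n, centrality_i delta R i.

(* Main.v *)
Require Import Defs.
From mathcomp Require Import all_boot.
From Stdlib Require Import Relations FunctionalExtensionality ProofIrrelevance IndefiniteDescription.
From mathcomp Require Import all_boot zify.


Definition upd {n : nat} (g : {ffun 'I_n -> bool}) (i : 'I_n) (b : bool)
  : {ffun 'I_n -> bool} := [ffun x => if x == i then b else g x].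

Lemma upd_at n (g : {ffun 'I_n -> bool}) i b : upd g i b i = b.
Proof. by rewrite ffunE eqxx. Qed.

Lemma upd_ne n (g : {ffun 'I_n -> bool}) i b x : x != i -> upd g i b x = g x.
Proof. by rewrite ffunE => /negPf ->. Qed.

Lemma upd_upd n (g : {ffun 'I_n -> bool}) i a b : upd (upd g i a) i b = upd g i b.
Proof. apply/ffunP => x; rewrite !ffunE; by case: (x == i). Qed.

Lemma upd_comm n (g : {ffun 'I_n -> bool}) i j a b : i != j ->
  upd (upd g i a) j b = upd (upd g j b) i a.
Proof.
move=> Hij; apply/ffunP => x; rewrite !ffunE.
case: (eqVneq x i) => [->|Hxi]; first by rewrite (negPf Hij).
by [].
Qed.

Lemma upd_id n (g : {ffun 'I_n -> bool}) i b : g i = b -> upd g i b = g.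
Proof. move=> <-; apply/ffunP => x; rewrite !ffunE; by case: eqP => [->|]. Qed.

Lemma ext_restr_upd n (i : 'I_n) b (g : {ffun 'I_n -> bool}) : ext i b (restr i g) = upd g i b.
Proof.
apply/ffunP => x; rewrite !ffunE; case: insubP => [y Hy Hv|Hn].
  by rewrite ffunE Hv (negPf Hy).
by move: Hn; rewrite negbK => ->.
Qed.

Lemma ext_val n (i : 'I_n) b f x (H : x != i) : ext i b f x = f (exist _ x H).
Proof. by rewrite ffunE insubT. Qed.

Lemma ext_at n (i : 'I_n) b f : ext i b f i = b.
Proof. by rewrite ffunE insubN // negbK. Qed.

Lemma restr_ext n (i : 'I_n) b f : restr i (ext i b f) = f.
Proof.
apply/ffunP => y; rewrite ffunE; case: y => x H /=.
by rewrite ext_val.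
Qed.

Lemma ext_restr n (i : 'I_n) (g : {ffun 'I_n -> bool}) : ext i (g i) (restr i g) = g.
Proof. by rewrite ext_restr_upd upd_id. Qed.

Lemma ext_upd n (i : 'I_n) b f : ext i b f = upd (ext i true f) i b.
Proof. by rewrite -{1}(restr_ext _ i true f) ext_restr_upd. Qed.

Lemma glue_ext A n (l : 'I_n) (a b : cube_minus A l) j f :
  glue l a b (ext l j f) = if j then b f else a f.
Proof. by rewrite /glue ext_at restr_ext. Qed.

Lemma face_glue A n (l : 'I_n) (a b : cube_minus A l) j :
  face l j (glue l a b) = if j then b else a.
Proof. apply: functional_extensionality => f; rewrite /face glue_ext; by case: j. Qed.

Lemma refl_eval A n (i : 'I_n) j (gam : cube A n) g :
  refl_cube i j gam g = gam (upd g i j).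
Proof. by rewrite /refl_cube /glue /face ext_restr_upd; case: (g i). Qed.

Lemma sym_eval A n (i : 'I_n) (gam : cube A n) g :
  sym_cube i gam g = gam (upd g i (~~ g i)).
Proof. by rewrite /sym_cube /glue /face !ext_restr_upd; case: (g i). Qed.

Lemma one_restr n (i : 'I_n) : restr i [ffun => true] = [ffun => true].
Proof. by apply/ffunP => y; rewrite !ffunE. Qed.

Lemma ext_one n (i : 'I_n) b : ext i b [ffun => true] = upd [ffun => true] i b.
Proof. by rewrite -(one_restr _ i) ext_restr_upd. Qed.


Definition vec4 {T : Type} (a b c d : T) : 'I_4 -> T :=
  fun k => match nat_of_ord k with 0 => a | 1 => b | 2 => c | _ => d end.

Inductive tf {S : signature} (A : algebra S) : (('I_4 -> A) -> A) -> Prop :=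
 | tf_proj (k : 'I_4) : tf A (fun v => v k)
 | tf_op (f : op_sym S) (args : 'I_(arity S f) -> ('I_4 -> A) -> A) :
     (forall i, tf A (args i)) -> tf A (fun v => interp A f (fun i => args i v)).

Definition Fcar {S} (A : algebra S) := {w : ('I_4 -> A) -> A | tf A w}.

Definition Finterp {S} (A : algebra S) (f : op_sym S) (args : 'I_(arity S f) -> Fcar A)
  : Fcar A :=
  exist _ (fun v => interp A f (fun i => proj1_sig (args i) v))
    (tf_op A f (fun i => proj1_sig (args i)) (fun i => proj2_sig (args i))).

Definition Falg {S} (A : algebra S) : algebra S := Algebra S (Fcar A) (Finterp A).

Lemma sig_eq (T : Type) (P : T -> Prop) (a b : sig P) : proj1_sig a = proj1_sig b -> a = b.
Proof. case: a => x Hx; case: b => y Hy /= E; subst y; f_equal; apply: proof_irrelevance. Qed.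

Lemma Feval {S} (A : algebra S) (v : nat -> Falg A) (t : term S nat) :
  proj1_sig (eval_term (Falg A) v t) = fun e => eval_term A (fun k => proj1_sig (v k) e) t.
Proof.
elim: t => [x|f args IH] //=.
apply: functional_extensionality => e /=.
f_equal; apply: functional_extensionality => i; by rewrite IH.
Qed.

Lemma Fmodels {S} Sigma (A : algebra S) : models Sigma A -> models Sigma (Falg A).
Proof.
move=> HA s t Hst v; apply: sig_eq; rewrite !Feval.
apply: functional_extensionality => e; exact: HA.
Qed.

Lemma tf_compat {S} (A : algebra S) (delta : A -> A -> Prop) :
  is_congruence A delta -> forall w, tf A w ->
  forall v v', (forall k, delta (v k) (v' k)) -> delta (w v) (w v').
Proof.
move=> [_ Hc] w; elim => [k|f args _ IH] v v' H //=.
apply: Hc => i; exact: IH.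
Qed.

Definition o0 : 'I_4 := @Ordinal 4 0 isT.
Definition o1 : 'I_4 := @Ordinal 4 1 isT.
Definition o2 : 'I_4 := @Ordinal 4 2 isT.
Definition o3 : 'I_4 := @Ordinal 4 3 isT.

Lemma day_lemma {S} (Sigma : term S nat -> term S nat -> Prop)
  (HV : cm_variety Sigma) (A : algebra S) (HA : models Sigma A)
  (delta : A -> A -> Prop) (Hdelta : is_congruence A delta) (p q r : A) :
  (forall w, tf A w -> (forall a b, w (vec4 a b b a) = a) ->
     delta (w (vec4 p p r r)) (w (vec4 p q q r))) -> delta p r.
Proof.
move=> H.
have Hmod := HV _ (Fmodels Sigma A HA).
pose al := fun x y : Falg A => forall a b d, proj1_sig x (vec4 a b b d) = proj1_sig y (vec4 a b b d).
pose be := fun x y : Falg A => forall a d, proj1_sig x (vec4 a a d d) = proj1_sig y (vec4 a a d d).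
pose ga := fun x y : Falg A => forall a b, proj1_sig x (vec4 a b b a) = proj1_sig y (vec4 a b b a).
have Hal : is_congruence (Falg A) al.
  split; [split|].
  - by move=> x a b d.
  - move=> x y z H1 H2 a b d. by rewrite H1 H2.
  - move=> x y H1 a b d. by rewrite H1.
  - move=> f a b Hab a' b' d' /=; f_equal; apply: functional_extensionality => i; exact: Hab.
have Hbe : is_congruence (Falg A) be.
  split; [split|].
  - by move=> x a d.
  - move=> x y z H1 H2 a d. by rewrite H1 H2.
  - move=> x y H1 a d. by rewrite H1.
  - move=> f a b Hab a' d' /=; f_equal; apply: functional_extensionality => i; exact: Hab.
have Hga : is_congruence (Falg A) ga.
  split; [split|].
  - by move=> x a d.
  - move=> x y z H1 H2 a d. by rewrite H1 H2.
  - move=> x y H1 a d. by rewrite H1.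
  - move=> f a b Hab a' d' /=; f_equal; apply: functional_extensionality => i; exact: Hab.
pose pr (k : 'I_4) : Falg A := exist _ (fun v => v k) (tf_proj A k).
have Hj := Hmod al be ga Hal Hbe Hga (fun x y H a b => H a b a) (pr o0) (pr o3).
have : con_join al (con_meet be ga) (pr o0) (pr o3).
  apply: Hj; split.
    apply: t_trans (t_step _ _ _ _ (or_intror _ : _ \/ be (pr o2) (pr o3))).
      apply: t_trans (t_step _ _ _ _ (or_introl _ : al (pr o1) (pr o2) \/ _)).
        by apply: t_step; right => a d.
      by move=> a b d.
    by move=> a d.
  by move=> a b.
have main : forall x y, clos_trans _ (fun x y => al x y \/ con_meet be ga x y) x y ->
   (forall a b, proj1_sig x (vec4 a b b a) = a) ->
   (forall a b, proj1_sig y (vec4 a b b a) = a) /\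
   delta (proj1_sig x (vec4 p p r r)) (proj1_sig y (vec4 p p r r)).
  have [[dr dt ds] _] := Hdelta.
  move=> x y; elim => {x y} [x y [Hxy|[Hb Hg]]|x y z _ IH1 _ IH2] Dx.
  - split; first by move=> a b; rewrite -Hxy.
    apply: (dt _ (proj1_sig x (vec4 p q q r))); first exact: H (proj2_sig x) Dx.
    rewrite Hxy; apply: ds; apply: H (proj2_sig y) _.
    by move=> a b; rewrite -Hxy.
  - split; first by move=> a b; rewrite -Hg.
    by rewrite Hb.
  - have [Dy H1] := IH1 Dx; have [Dz H2] := IH2 Dy.
    split => //; exact: dt H1 H2.
move/main => /(_ (fun a b => erefl)) [_].
done.
Qed.


Lemma tf_closed {S} (A : algebra S) n (R : cube A n -> Prop) :
  subuniverse_pow A R -> forall w, tf A w -> forall Xs : 'I_4 -> cube A n,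
  (forall k, R (Xs k)) -> R (fun g => w (fun k => Xs k g)).
Proof.
move=> HR w; elim => [k|f args _ IH] Xs HX //=.
exact: (HR f (fun i g => args i (fun k => Xs k g)) (fun i => IH i Xs HX)).
Qed.

Lemma vec4_app {T U : Type} (X1 X2 X3 X4 : T -> U) g :
  (fun k => vec4 X1 X2 X3 X4 k g) = vec4 (X1 g) (X2 g) (X3 g) (X4 g).
Proof. apply: functional_extensionality => k; by case: k => [[|[|[|[|?]]]] ?]. Qed.

Definition Ch {A : Type} {n : nat} (l : 'I_n) (R : cube A n -> Prop) (s : nat)
  (gam : cube A n) : Prop :=
  exists mu : nat -> cube_minus A l,
    face l false gam = mu 0 /\ face l true gam = mu s.-1 /\
    forall r, r < s.-1 -> R (glue l (mu r) (mu r.+1)).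

Lemma compose_Ch {A : Type} {n : nat} (l : 'I_n) (R : cube A n -> Prop) gam :
  compose_l l R gam <-> exists s, 2 <= s /\ Ch l R s gam.
Proof.
split; first by case=> s [mu [H1 [H2 [H3 H4]]]]; exists s; split => //; exists mu.
by case=> s [H1 [mu [H2 [H3 H4]]]]; exists s, mu.
Qed.

Lemma Ch_sub {S} (A : algebra S) n (l : 'I_n) (R : cube A n -> Prop) s :
  subuniverse_pow A R -> subuniverse_pow A (Ch l R s).
Proof.
move=> HR f args H.
pose mu k := proj1_sig (constructive_indefinite_description _ (H k)).
have Hmu k := proj2_sig (constructive_indefinite_description _ (H k)).
exists (fun r h => interp A f (fun k => mu k r h)); split; [|split].
- apply: functional_extensionality => h; rewrite /face; f_equal.
  apply: functional_extensionality => k; case: (Hmu k) => [E _].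
  exact: (equal_f E h).
- apply: functional_extensionality => h; rewrite /face; f_equal.
  apply: functional_extensionality => k; case: (Hmu k) => [_ [E _]].
  exact: (equal_f E h).
- move=> r Hr; cbv beta.
  have -> : glue l (fun h => interp A f (fun k => mu k r h))
                   (fun h => interp A f (fun k => mu k r.+1 h)) =
            fun g => interp A f (fun k => glue l (mu k r) (mu k r.+1) g).
    by apply: functional_extensionality => g; rewrite /glue; case: (g l).
  apply: HR => k; case: (Hmu k) => [_ [_ E]]; exact: E.
Qed.

Lemma glue_refl0 {A : Type} n (l : 'I_n) (a b : cube_minus A l) :
  refl_cube l false (glue l a b) = glue l a a.
Proof. by rewrite /refl_cube face_glue. Qed.
Lemma glue_refl1 {A : Type} n (l : 'I_n) (a b : cube_minus A l) :
  refl_cube l true (glue l a b) = glue l b b.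
Proof. by rewrite /refl_cube face_glue. Qed.
Lemma glue_sym {A : Type} n (l : 'I_n) (a b : cube_minus A l) :
  sym_cube l (glue l a b) = glue l b a.
Proof. by rewrite /sym_cube !face_glue. Qed.

Lemma Ch_mono {A : Type} n (l : 'I_n) (R : cube A n -> Prop) s s' gam :
  (forall c, R c -> R (refl_cube l true c)) -> 2 <= s -> s <= s' ->
  Ch l R s gam -> Ch l R s' gam.
Proof.
move=> Hrefl Hs Hss [mu [H1 [H2 H3]]].
exists (fun r => mu (minn r s.-1)); split; [|split].
- by rewrite H1 /minn; case: ifP => //; lia.
- by rewrite H2; congr mu; lia.
- move=> r Hr; cbv beta.
  case: (ltnP r s.-1) => Hrs.
    have -> : minn r.+1 s.-1 = r.+1 by lia.
    exact: H3.
  have -> : minn r.+1 s.-1 = s.-1 by lia.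
  have := H3 s.-2 ltac:(lia).
  have -> : s.-2.+1 = s.-1 by lia.
  by move/Hrefl; rewrite glue_refl1.
Qed.

Lemma Ch_glue2 {A : Type} n (l : 'I_n) (R : cube A n -> Prop) a b :
  R (glue l a b) -> Ch l R 2 (glue l a b).
Proof.
move=> H; exists (fun r => if r is 0 then a else b); rewrite !face_glue.
split => //; split => //; by case.
Qed.


Lemma Ch_precomp {A : Type} n (l : 'I_n) (R : cube A n -> Prop) s
  (phi : {ffun 'I_n -> bool} -> {ffun 'I_n -> bool}) gam :
  (forall g, phi g l = g l) ->
  (forall g g', restr l g = restr l g' -> restr l (phi g) = restr l (phi g')) ->
  (forall c, R c -> R (fun g => c (phi g))) ->
  Ch l R s gam -> Ch l R s (fun g => gam (phi g)).
Proof.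
move=> P1 P2 PR [mu [H1 [H2 H3]]].
pose phi' h := restr l (phi (ext l false h)).
have Key : forall b h, phi (ext l b h) = ext l b (phi' h).
  move=> b h; rewrite -(ext_restr _ l (phi (ext l b h))) P1 ext_at.
  congr ext; apply: P2; by rewrite !restr_ext.
exists (fun r h => mu r (phi' h)); split; [|split].
- apply: functional_extensionality => h; rewrite /face Key.
  exact: (equal_f H1 (phi' h)).
- apply: functional_extensionality => h; rewrite /face Key.
  exact: (equal_f H2 (phi' h)).
- move=> r Hr.
  have -> : glue l (fun h => mu r (phi' h)) (fun h => mu r.+1 (phi' h)) =
            fun g => glue l (mu r) (mu r.+1) (phi g).
    apply: functional_extensionality => g.
    rewrite -{2}(ext_restr _ l g) Key glue_ext /glue; by case: (g l).
  exact: PR (H3 r Hr).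
Qed.

Lemma restr_upd_eq n (l i : 'I_n) (g g' : {ffun 'I_n -> bool}) b :
  restr l g = restr l g' -> restr l (upd g i b) = restr l (upd g' i b).
Proof.
move=> E; apply/ffunP => y; rewrite !ffunE.
case: eqP => // _; move/ffunP: E => /(_ y); by rewrite !ffunE.
Qed.

Lemma compose_tol {S} (A : algebra S) n (l : 'I_n) (R : cube A n -> Prop) :
  tolerance A R -> tolerance A (compose_l l R).
Proof.
move=> [Hsub Hts].
have Hrefl1 : forall c, R c -> R (refl_cube l true c) by move=> c /Hts /(_ l) [/(_ true)].
split.
- move=> f args H.
  have H' k := proj1 (compose_Ch l R (args k)) (H k).
  pose s k := proj1_sig (constructive_indefinite_description _ (H' k)).
  have Hs k := proj2_sig (constructive_indefinite_description _ (H' k)).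
  apply/compose_Ch; exists (maxn 2 (\max_(k < arity S f) s k)); split; first exact: leq_maxl.
  apply: Ch_sub => // k.
  case: (Hs k) => [H2 Hk]; apply: Ch_mono Hk => //.
  apply: leq_trans (leq_maxr _ _); exact: (leq_bigmax k).
- move=> gam /compose_Ch [s [Hs2 [mu [H1 [H2 H3]]]]] i.
  case: (eqVneq i l) => [->|Hil].
  + split.
      move=> j; apply/compose_Ch; exists 2; split => //.
      rewrite /refl_cube; apply: Ch_glue2.
      case: j.
        have := H3 s.-2 ltac:(lia); have -> : s.-2.+1 = s.-1 by lia.
        by move/(Hts _) => /(_ l) [/(_ true)]; rewrite glue_refl1 H2.
      have := H3 0 ltac:(lia).
      by move/(Hts _) => /(_ l) [/(_ false)]; rewrite glue_refl0 H1.
    apply/compose_Ch; exists s; split => //.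
    exists (fun r => mu (s.-1 - r)); split; [|split].
    * by rewrite /sym_cube face_glue H2 subn0.
    * by rewrite /sym_cube face_glue H1 subnn.
    * move=> r Hr.
      have := H3 (s.-1 - r.+1) ltac:(lia).
      have -> : (s.-1 - r.+1).+1 = s.-1 - r by lia.
      by move/(Hts _) => /(_ l) [_]; rewrite glue_sym.
  + have Hli : l != i by rewrite eq_sym.
    split.
      move=> j; apply/compose_Ch; exists s; split => //.
      have -> : refl_cube i j gam = fun g => gam (upd g i j).
        by apply: functional_extensionality => g; rewrite refl_eval.
      apply: Ch_precomp.
      * by move=> g; rewrite upd_ne.
      * by move=> g g' E; apply: restr_upd_eq.
      * move=> c Hc.
        have -> : (fun g => c (upd g i j)) = refl_cube i j c.
          by apply: functional_extensionality => g; rewrite refl_eval.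
        by have [/(_ j) ? _] := Hts c Hc i.
      * by exists mu.
    apply/compose_Ch; exists s; split => //.
    have -> : sym_cube i gam = fun g => gam (upd g i (~~ g i)).
      by apply: functional_extensionality => g; rewrite sym_eval.
    apply: Ch_precomp.
    * by move=> g; rewrite upd_ne.
    * move=> g g' E.
      have -> : g i = g' i.
        move/ffunP: E => /(_ (exist (fun x => x != l) i Hil)).
        by rewrite !ffunE.
      exact: restr_upd_eq.
    * move=> c Hc.
      have -> : (fun g => c (upd g i (~~ g i))) = sym_cube i c.
        by apply: functional_extensionality => g; rewrite sym_eval.
      by have [_ ?] := Hts c Hc i.
    * by exists mu.
Qed.


Lemma line_glue {A : Type} n (delta : A -> A -> Prop) (l : 'I_n) (a b : cube_minus A l) f :
  line_in delta (glue l a b) l f = delta (a f) (b f).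
Proof. by rewrite /line_in !glue_ext. Qed.

Lemma chain_central {S} (Sigma : term S nat -> term S nat -> Prop)
  (HV : cm_variety Sigma) (A : algebra S) (HA : models Sigma A)
  n (delta : A -> A -> Prop) (Hdelta : is_congruence A delta)
  (l : 'I_n) (R : cube A n -> Prop) (HR : tolerance A R)
  (Hc : centrality_i delta R l) :
  forall s, 2 <= s -> forall gam, Ch l R s gam ->
  (forall f, f != [ffun => true] -> line_in delta gam l f) ->
  line_in delta gam l [ffun => true].
Proof.
have [[dr dt ds] dc] := Hdelta.
have [Hsub Hts] := HR.
elim => [//|s IH] Hs gam [mu [H1 [H2 H3]]] Hsup.
have Hline : forall f, line_in delta gam l f = delta (mu 0 f) (mu s f).
  by move=> f; rewrite /line_in -/(face l false gam f) -/(face l true gam f) H1 H2.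
case: (ltnP s 2) => Hs2.
  have Es : s = 1 by lia.
  subst s.
  have HR0 := H3 0 isT.
  have HH : forall f, f != [ffun => true] -> line_in delta (glue l (mu 0) (mu 1)) l f.
    by move=> f Hf; rewrite line_glue -Hline; exact: Hsup.
  by have := Hc _ HR0 HH; rewrite line_glue Hline.
rewrite Hline.
set one := [ffun => true] : {ffun idx_minus l -> bool}.
apply: (day_lemma Sigma HV A HA delta Hdelta (mu 0 one) (mu s.-1 one) (mu s one)).
move=> w Hw D1.
have Hr : forall c, R c -> R (refl_cube l true c) by move=> c /Hts /(_ l) [/(_ true)].
have Rst : forall r, r < s -> R (glue l (mu r) (mu r.+1)) by [].
have Hlast : R (glue l (mu s.-1) (mu s)).
  have := Rst s.-1 ltac:(lia); by have -> : s.-1.+1 = s by lia.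
pose X1 := glue l (mu 0) (mu 0).
pose X2 := glue l (mu 0) (mu s.-1).
pose X3 := glue l (mu s) (mu s.-1).
pose X4 := glue l (mu s) (mu s).
have C2 : forall a b, R (glue l a b) -> Ch l R s (glue l a b).
  by move=> a b Hab; apply: Ch_mono (Ch_glue2 _ _ _ _ _ Hab) => //.
have CX : forall k, Ch l R s (vec4 X1 X2 X3 X4 k).
  case => [[|[|[|[|?]]]] ?] /=.
  - apply: C2; have := Rst 0 ltac:(lia).
    by move/Hts => /(_ l) [/(_ false)]; rewrite glue_refl0.
  - exists mu; rewrite !face_glue; split => //; split => //.
    move=> r Hr'; apply: Rst; lia.
  - apply: C2; move: Hlast => /Hts /(_ l) [_]; by rewrite glue_sym.
  - apply: C2; move: Hlast => /Hts /(_ l) [/(_ true)]; by rewrite glue_refl1.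
  - apply: C2; move: Hlast => /Hts /(_ l) [/(_ true)]; by rewrite glue_refl1.
have HM := tf_closed A n (Ch l R s) (Ch_sub A n l R s Hsub) w Hw _ CX.
have Mval : forall b f, (fun g => w (fun k => vec4 X1 X2 X3 X4 k g)) (ext l b f) =
   w (vec4 (if b then mu 0 f else mu 0 f) (if b then mu s.-1 f else mu 0 f)
           (if b then mu s.-1 f else mu s f) (if b then mu s f else mu s f)).
  by move=> b f /=; rewrite vec4_app /X1 /X2 /X3 /X4 !glue_ext.
have := IH ltac:(lia) _ HM.
rewrite /line_in !Mval; apply => f Hf.
have Hd : delta (mu 0 f) (mu s f) by rewrite -Hline; exact: Hsup.
rewrite !Mval.
apply: (dt _ (mu 0 f)).
  rewrite -[X in delta _ X](D1 (mu 0 f) (mu 0 f)); apply: (tf_compat A delta Hdelta w Hw).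
  by case => [[|[|[|[|?]]]] ?] /=; auto.
rewrite -[X in delta X _](D1 (mu 0 f) (mu s.-1 f)); apply: (tf_compat A delta Hdelta w Hw).
by case => [[|[|[|[|?]]]] ?] /=; auto.
Qed.


Lemma sym_central {S} (Sigma : term S nat -> term S nat -> Prop)
  (HV : cm_variety Sigma) (A : algebra S) (HA : models Sigma A)
  n (delta : A -> A -> Prop) (Hdelta : is_congruence A delta)
  (l : 'I_n) (R : cube A n -> Prop) (HR : tolerance A R)
  (Hc : centrality_i delta R l) (i : 'I_n) (Hil : i != l) :
  centrality_i delta R i.
Proof.
have [[dr dt ds] dc] := Hdelta.
have [Hsub Hts] := HR.
have Hli : l != i by rewrite eq_sym.
move=> gam Hg Hsup.
have Hsup' : forall g : {ffun 'I_n -> bool}, (exists x, x != i /\ g x = false) ->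
    delta (gam (upd g i false)) (gam (upd g i true)).
  move=> g [x [Hx Hgx]].
  have := Hsup (restr i g); rewrite /line_in !ext_restr_upd; apply.
  apply/negP => /eqP /ffunP /(_ (exist _ x Hx)); by rewrite !ffunE Hgx.
set one := [ffun => true] : {ffun 'I_n -> bool}.
have one1 : forall x, one x = true by move=> x; rewrite ffunE.
rewrite /line_in !ext_one -/one (upd_id _ one i true) //.
pose X4 := refl_cube l true gam.
pose X3 := sym_cube l gam.
pose X1 := refl_cube i false X4.
pose X2 := refl_cube i false X3.
have RX4 : R X4 by have [/(_ true) ? _] := Hts gam Hg l.
have RX3 : R X3 by have [_ ?] := Hts gam Hg l.
have RX1 : R X1 by have [/(_ false) ? _] := Hts X4 RX4 i.
have RX2 : R X2 by have [/(_ false) ? _] := Hts X3 RX3 i.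
have Hq : delta (gam (upd (upd one l false) i false)) (gam (upd one l false)).
  rewrite -{2}(upd_id _ (upd one l false) i true); last by rewrite upd_ne.
  apply: Hsup'; exists l; split => //; by rewrite upd_at.
apply: (day_lemma Sigma HV A HA delta Hdelta _ (gam (upd (upd one l false) i false))).
move=> w Hw D1.
have CX : forall k, R (vec4 X1 X2 X3 X4 k) by case => [[|[|[|[|?]]]] ?] /=.
pose M := (fun g => w (fun k => vec4 X1 X2 X3 X4 k g)).
have HM : R M := tf_closed A n R Hsub w Hw _ CX.
have Mval : forall (g : {ffun 'I_n -> bool}) b,
   M (upd g l b) =
   w (vec4 (gam (upd (upd g i false) l true)) (gam (upd (upd g i false) l (~~ b)))
           (gam (upd g l (~~ b))) (gam (upd g l true))).
  move=> g b; rewrite /M vec4_app /X1 /X2 /X3 /X4.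
  rewrite (refl_eval _ _ i false) (refl_eval _ _ l true) (refl_eval _ _ i false).
  rewrite (sym_eval _ _ l) (sym_eval _ _ l) (refl_eval _ _ l true).
  f_equal; f_equal; f_equal; apply/ffunP => x; rewrite !ffunE;
   (case: (eqVneq x i) => [E|Hx]; first by subst x; rewrite ?eqxx ?(negPf Hil) ?(negPf Hli));
   (rewrite ?(negPf Hx); case: (eqVneq x l) => [E|Hx']; [subst x; by rewrite ?eqxx ?(negPf Hli)| by rewrite ?(negPf Hx') ?(negPf Hx)]).
have Hsupp : forall f, f != [ffun => true] -> line_in delta M l f.
  move=> f Hf.
  have [[x Hx] Hy] : exists y, f y = false.
    case: (boolP [exists y, ~~ f y]) => [/existsP [y Hy]|Hn]; first exact: (ex_intro _ y (negPf Hy)).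
    case/negP: Hf; apply/eqP/ffunP => y; rewrite ffunE.
    by move/existsPn: Hn => /(_ y); case: (f y).
  rewrite /line_in (ext_upd _ l false).
  set g := ext l true f.
  have -> : M g = M (upd g l true) by rewrite upd_id // /g ext_at.
  rewrite !Mval /=.
  have Hgx : g x = false by rewrite /g (ext_val _ _ _ _ _ Hx).
  case Hgi : (g i).
  - have Hxi : x != i by apply/eqP => E; subst x; rewrite Hgi in Hgx.
    have Hc0 : delta (gam (upd (upd g i false) l true)) (gam (upd g l true)).
      rewrite (upd_comm _ g i l) // -{2}(upd_id _ (upd g l true) i true); last by rewrite upd_ne.
      apply: Hsup'; exists x; split => //; by rewrite upd_ne.
    have Hd0 : delta (gam (upd (upd g i false) l false)) (gam (upd g l false)).
      rewrite (upd_comm _ g i l) // -{2}(upd_id _ (upd g l false) i true); last by rewrite upd_ne.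
      apply: Hsup'; exists l; split => //; by rewrite upd_at.
    set c0 := gam (upd (upd g i false) l true) in Hc0 *.
    set d0 := gam (upd (upd g i false) l false) in Hd0 *.
    apply: (dt _ c0).
      rewrite -[X in delta _ X](D1 c0 c0); apply: (tf_compat A delta Hdelta w Hw).
      by case => [[|[|[|[|?]]]] ?] /=; auto.
    rewrite -[X in delta X _](D1 c0 d0); apply: (tf_compat A delta Hdelta w Hw).
    by case => [[|[|[|[|?]]]] ?] /=; auto.
  - rewrite (upd_id _ g i false) //.
    by rewrite D1 D1.
have := Hc _ HM Hsupp.
rewrite /line_in !ext_one !Mval /=.
rewrite (upd_id _ (upd one i false) l true); last by rewrite upd_ne // ffunE.
rewrite (upd_id _ one l true); last by rewrite ffunE.
rewrite (upd_comm _ one i l) //.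
move=> H; apply: (dt _ _ _ H).
apply: (tf_compat A delta Hdelta w Hw).
by case => [[|[|[|[|?]]]] ?] /=; auto.
Qed.


Theorem proposition2p5 (S : signature) (Sigma : term S nat -> term S nat -> Prop)
  (HV : cm_variety Sigma) (A : algebra S) (HA : models Sigma A)
  (n : nat) (Hn : 2 <= n) (delta : A -> A -> Prop) (Hdelta : is_congruence A delta)
  (l : 'I_n) (R : cube A n -> Prop)
  (HR : tolerance A R) (Hc : centrality delta R) :
  tolerance A (compose_l l R) /\ centrality delta (compose_l l R).
Proof.
have Htol := compose_tol A n l R HR.
split => //.
have Hcl : centrality_i delta (compose_l l R) l.
  move=> gam /compose_Ch [s [Hs HCh]] Hsup.
  exact: (chain_central Sigma HV A HA n delta Hdelta l R HR (Hc l) s Hs gam HCh Hsup).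
move=> i; case: (eqVneq i l) => [->|Hil] //.
exact: (sym_central Sigma HV A HA n delta Hdelta l (compose_l l R) Htol Hcl i Hil).
Qed.
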